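(* Let $\{(G_n,r_n),g_n^{n+1}\}$ be a g-cell structure in which every $G_n$ has the discrete topology, with inverse limit $G_\infty$, natural relation $r$ and quotient map $\pi:G_\infty\to G^\ast=G_\infty/r$. Suppose that for every $\bar x=(x_n)\in G_\infty$ and every open set $A\subset G_\infty$ with $B(\bar x,r)\subset A$ there exists $j\in\mathbb{N}$ such that $B(g_j^{-1}(x_j),r)\subset A$. Then the collection $$\{G^\ast\setminus\pi(G_\infty\setminus\mathcal V):\ \mathcal V \text{ open in } G_\infty\}$$ is a basis of open sets for the topology of $G^\ast$.
   Context: A cellular graph is a pair $(G,r)$ where $G$ is a nonempty topological space and $r\subset G\times G$ is a reflexive and symmetric relation. For $u\in G$, $B(u,r)=\{v\in G:(u,v)\in r\}$, and for $A\subset G$, $B(A,r)=\bigcup_{a\in A}B(a,r)$. An inverse sequence of cellular graphs $\{(G_n,r_n),g_n^{n+1}\}$ consists of cellular graphs $(G_n,r_n)$, $n\in\mathbb{N}$, and continuous maps $g_n^{n+1}:G_{n+1}\to G_n$ such that $(g_n^{n+1}(x),g_n^{n+1}(y))\in r_n$ whenever $(x,y)\in r_{n+1}$; $g_n^n=\mathrm{id}$, $g_n^l=g_n^{n+1}\circ\cdots\circ g_{l-1}^{l}$. Its inverse limit is $G_\infty=\{(x_n)\in\prod_n G_n: g_i^j(x_j)=x_i\ \forall j\ge i\}$ with the subspace of the product topology; $g_i:G_\infty\to G_i$ is the restricted $i$-th projection. The natural relation on $G_\infty$ is $r=\{(\bar x,\bar y):(x_n,y_n)\in r_n\ \forall n\}$.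 The sequence is a g-cell structure if $r$ is an equivalence relation; $G^\ast=G_\infty/r$ carries the quotient topology and $\pi$ is the quotient map. *)

(* Defs.v *)
From Stdlib Require Import List.


Section GCell.

(* An inverse sequence of cellular graphs whose spaces G n all carry the
   DISCRETE topology (so every subset of G n is open and every map out of
   G n is continuous; no topology data needs to be stored). *)
Variable G : nat -> Type.
Variable r : forall n, G n -> G n -> Prop.
Variable g : forall n, G (S n) -> G n.

Definition cellular_graph (n : nat) : Prop :=
  inhabited (G n) /\ (forall u, r n u u) /\ (forall u v, r n u v -> r n v u).

Definition inverse_seq_cellular : Prop :=
  (forall n, cellular_graph n) /\
  (forall n x y, r (S n) x y -> r n (g n x) (g n y)).

Fixpoint bond (i k : nat) : G (k + i) -> G i :=
  match k return G (k + i) -> G i with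
  | O => fun x => x
  | S k' => fun x => bond i k' (g (k' + i) x)
  end.

Definition prodG : Type := forall n, G n.
Definition in_limit (x : prodG) : Prop := forall i k, bond i k (x (k + i)) = x i.
Definition Ginf : Type := { x : prodG | in_limit x }.
Definition coord (x : Ginf) (n : nat) : G n := proj1_sig x n.

(* product topology on prodG with discrete factors: U is open iff every
   point of U has a basic neighbourhood prod_{i in F} V_i x prod_{rest} G_i
   (F finite, V_i arbitrary since the factors are discrete) inside U. *)
Definition prod_open (U : prodG -> Prop) : Prop :=
  forall x, U x -> exists (F : list nat) (V : forall i, G i -> Prop),
    (forall i, In i F -> V i (x i)) /\
    (forall y, (forall i, In i F -> V i (y i)) -> U y).

Definition open_inf (A : Ginf -> Prop) : Prop :=
  exists U, prod_open U /\ forall x : Ginf, A x <-> U (proj1_sig x).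

Definition r_inf (x y : Ginf) : Prop := forall n, r n (coord x n) (coord y n).

Definition equivalence_rel {T : Type} (R : T -> T -> Prop) : Prop :=
  (forall x, R x x) /\ (forall x y, R x y -> R y x) /\
  (forall x y z, R x y -> R y z -> R x z).

Definition g_cell_structure : Prop := inverse_seq_cellular /\ equivalence_rel r_inf.

Definition Ball (x : Ginf) : Ginf -> Prop := fun y => r_inf x y.
Definition BallSet (A : Ginf -> Prop) : Ginf -> Prop :=
  fun y => exists a, A a /\ r_inf a y.

(* g_j^{-1}(x_j) for x in G_oo *)
Definition fiber (j : nat) (x : Ginf) : Ginf -> Prop :=
  fun y => coord y j = coord x j.

Definition Gstar : Type := { C : Ginf -> Prop | exists x, C = r_inf x }.
Definition pi (x : Ginf) : Gstar := exist _ (r_inf x) (ex_intro _ x eq_refl).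

Definition open_star (W : Gstar -> Prop) : Prop :=
  open_inf (fun x => W (pi x)).

Definition star_set (V : Ginf -> Prop) : Gstar -> Prop :=
  fun p => ~ (exists x, ~ V x /\ pi x = p).

Definition is_basis {T : Type} (opn : (T -> Prop) -> Prop)
    (Bs : (T -> Prop) -> Prop) : Prop :=
  (forall B, Bs B -> opn B) /\
  (forall W p, opn W -> W p -> exists B, Bs B /\ B p /\ (forall q, B q -> W q)).

End GCell.
Arguments open_inf {G g} A.
Arguments r_inf {G r g} x y.
Arguments Ball {G r g} x y.
Arguments BallSet {G r g} A y.
Arguments fiber {G g} j x y.
Arguments star_set {G r g} V p.

(* Main.v *)
Require Import Defs.
From Stdlib Require Import List Classical FunctionalExtensionality PropExtensionality ProofIrrelevance.

Section H.
Variable G : nat -> Type.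
Variable r : forall n, G n -> G n -> Prop.
Variable g : forall n, G (S n) -> G n.

Lemma pi_surj (q : Gstar G r g) : exists x, q = pi G r g x.
Proof.
  destruct q as [C [x Hx]]. exists x. unfold pi.
  apply ProofIrrelevanceTheory.subset_eq_compat. exact Hx.
Qed.

Lemma pi_eq_r (x y : Ginf G g) : pi G r g x = pi G r g y -> @r_inf G r g x = @r_inf G r g y.
Proof. intro H. exact (f_equal (@proj1_sig _ _) H). Qed.

Lemma r_pi_eq (x y : Ginf G g) : equivalence_rel (@r_inf G r g) ->
  @r_inf G r g x y -> pi G r g x = pi G r g y.
Proof.
  intros [Hr [Hs Ht]] Hxy. unfold pi.
  apply ProofIrrelevanceTheory.subset_eq_compat.
  apply functional_extensionality; intro z.
  apply propositional_extensionality; split; intro H.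
  - apply (Ht y x z); auto.
  - apply (Ht x y z); auto.
Qed.
End H.

Theorem mainTheorem3 (G : nat -> Type) (r : forall n, G n -> G n -> Prop)
  (g : forall n, G (S n) -> G n) :
  g_cell_structure G r g ->
  (forall (x : Ginf G g) (A : Ginf G g -> Prop),
     open_inf A -> (forall y, @Ball G r g x y -> A y) ->
     exists j, forall y, @BallSet G r g (fiber j x) y -> A y) ->
  is_basis (open_star G r g)
    (fun W => exists V, open_inf V /\ W = @star_set G r g V).
Proof.
  intros [_ Heq] Hyp. split.
  - intros B [V [HV ->]].
    unfold open_star.
    exists (fun z => exists (x : Ginf G g) j,
        (forall y, @BallSet G r g (fiber j x) y -> V y) /\ z j = coord G g x j).
    split.
    + intros z [x [j [Hj Hz]]].
      exists (j :: nil), (fun i w => exists y : prodG G, y i = w /\ y j = z j).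
      split.
      * intros i _. exists z. auto.
      * intros y' Hy'. destruct (Hy' j (or_introl eq_refl)) as [y [E1 E2]].
        exists x, j. split; auto. congruence.
    + intros x. split.
      * intros Hs.
        assert (HB : forall y, @Ball G r g x y -> V y).
        { intros y Hxy. apply NNPP; intro Hn. apply Hs. exists y. split; auto.
          symmetry. apply r_pi_eq; auto. }
        destruct (Hyp x V HV HB) as [j Hj]. exists x, j. split; auto.
      * intros [x0 [j [Hj Hz]]] [y [Hny Hpi]].
        apply Hny. apply Hj. exists x. split.
        -- unfold fiber. exact Hz.
        -- apply pi_eq_r in Hpi.
           assert (Hyy : @r_inf G r g y y) by (destruct Heq; auto).
           rewrite Hpi in Hyy. exact Hyy.
  - intros W p HW Hp.
    destruct (pi_surj G r g p) as [x0 ->].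
    exists (@star_set G r g (fun x => W (pi G r g x))). split; [|split].
    + eexists. split; [exact HW | reflexivity].
    + intros [y [Hny Hpi]]. apply Hny. rewrite Hpi. exact Hp.
    + intros q Hq. destruct (pi_surj G r g q) as [x ->].
      apply NNPP; intro Hn. apply Hq. exists x. auto.
Qed.
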